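(* Let $N=pq$ with $p,q$ distinct primes. Let $b\in\mathbb{Z}$ and let $f=n_2X^2+n_1X+n_0\in\mathbb{Z}[X]$ be of degree $2$ with $f(b)=N$. If $\gcd(n_2b,N)=1$ and $\gcd(N,n_2b^2-n_0)=1$, then $\nu(f)=2p+2q-8$.
   Context: $Z_N=\{0,1,\dots,N-1\}$. For $g\in\mathbb{Z}[X]$, an element $x\in Z_N$ is called suitable for $g$ if $1<\gcd(g(x),N)<N$, and $\nu(g)$ denotes the number of $x\in Z_N$ suitable for $g$. *)

(* Defs.v *)
From mathcomp Require Import all_boot all_order all_algebra.
Set Implicit Arguments. Unset Strict Implicit. Unset Printing Implicit Defensive.
Import Order.TTheory GRing.Theory Num.Theory.
Local Open Scope ring_scope.

Definition suitable (N : nat) (g : {poly int}) (x : nat) : bool :=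
  (1 < gcdz g.[x%:Z] N%:Z) && (gcdz g.[x%:Z] N%:Z < N%:Z).

Definition nu (N : nat) (g : {poly int}) : nat :=
  #|[set x : 'I_N | suitable N g x]|.

(* Main.v *)
Require Import Defs.
From mathcomp Require Import all_boot all_order all_algebra.
From mathcomp Require Import ring zify.
Import Order.TTheory GRing.Theory Num.Theory.
Local Open Scope ring_scope.

Lemma two_roots (F : finFieldType) (a m1 m0 bb : F) :
  a != 0 -> a * bb ^+ 2 + m1 * bb + m0 = 0 -> a * bb ^+ 2 - m0 != 0 ->
  #|[set u : F | a * u ^+ 2 + m1 * u + m0 == 0]| = 2%N.
Proof.
move=> a0 hb hne.
set cc := - (a * bb + m1) / a.
have bc : bb != cc.
  apply/eqP=> e; move/eqP: hne; apply.
  have : a * cc + a * bb + m1 = 0 by rewrite /cc mulrCA divff // mulr1; ring.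
  rewrite -e => h.
  have -> : a * bb ^+ 2 - m0 = bb * (a * bb + a * bb + m1) - (a * bb ^+ 2 + m1 * bb + m0) by ring.
  by rewrite h hb; ring.
have -> : [set u : F | a * u ^+ 2 + m1 * u + m0 == 0] = [set bb; cc].
  apply/setP=> u; rewrite !inE.
have -> : a * u ^+ 2 + m1 * u + m0 = (u - bb) * (a * (u - cc)).
  have hm0 : m0 = - (a * bb ^+ 2 + m1 * bb) by by apply/eqP; rewrite -subr_eq0 opprK addrC hb.
  by rewrite hm0 /cc; field.
  by rewrite !mulf_eq0 (negbTE a0) /= !subr_eq0.
by rewrite cards2 bc.
Qed.

Lemma suit_xor (p q : nat) (z : int) : prime p -> prime q -> p != q ->
  ((1 < gcdz z (p * q)%N%:Z) && (gcdz z (p * q)%N%:Z < (p * q)%N%:Z)) =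
  ((p%:Z %| z)%Z (+) (q%:Z %| z)%Z).
Proof.
move=> hp hq pq.
rewrite -[(p%:Z %| z)%Z]/(p %| `|z|)%N -[(q%:Z %| z)%Z]/(q %| `|z|)%N.
rewrite /gcdz absz_nat !ltz_nat.
set m := `|z|%N.
have cpq : coprime p q by rewrite prime_coprime // dvdn_prime2.
have pq0 : (0 < p * q)%N by rewrite muln_gt0 !prime_gt0.
have g0 : (0 < gcdn m (p * q))%N by rewrite gcdn_gt0 pq0 orbT.
have gle : (gcdn m (p * q) <= p * q)%N by apply: dvdn_leq => //; apply: dvdn_gcdr.
have e1 : (gcdn m (p * q) == 1%N) = ~~ (p %| m)%N && ~~ (q %| m)%N.
  by rewrite -/(coprime m (p*q)) coprimeMr ![coprime m _]coprime_sym !prime_coprime.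
have e2 : (gcdn m (p * q) == p * q)%N = (p %| m)%N && (q %| m)%N.
  by rewrite -Gauss_dvd //; apply/eqP/idP => [<-|/gcdn_idPr //]; apply: dvdn_gcdl.
move: e1 e2 g0 gle; set g := gcdn _ _.
case Hp: (p %| m)%N; case Hq: (q %| m)%N => /= e1 e2 g0 gle.
- by move/eqP: e2 => ->; rewrite ltnn andbF.
- move/negbT: e1 => e1; move/negbT: e2 => e2; apply/andP; split; first by rewrite ltn_neqAle eq_sym e1.
  by rewrite ltn_neqAle e2.
- move/negbT: e1 => e1; move/negbT: e2 => e2; apply/andP; split; first by rewrite ltn_neqAle eq_sym e1.
  by rewrite ltn_neqAle e2.
- by move/eqP: e1 => ->.
Qed.

Lemma card_pre (A B : finType) (f : A -> B) (P : pred B) :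
  injective f -> (#|B| <= #|A|)%N -> #|[set x | P (f x)]| = #|[set z | P z]|.
Proof.
move=> fi le; have fb := inj_card_bij fi le.
rewrite -(on_card_preimset (onW_bij [set z | P z] fb)).
by apply: eq_card => x; rewrite !inE.
Qed.

Lemma card_xor (A B : finType) (SA : {set A}) (SB : {set B}) :
  #|[set z : A * B | (z.1 \in SA) (+) (z.2 \in SB)]| =
  (#|SA| * (#|B| - #|SB|) + (#|A| - #|SA|) * #|SB|)%N.
Proof.
have -> : [set z : A * B | (z.1 \in SA) (+) (z.2 \in SB)] =
  setX SA (~: SB) :|: setX (~: SA) SB.
  apply/setP => -[u v]; rewrite !inE /=.
  by case: (u \in SA); case: (v \in SB).
rewrite cardsU.
have -> : setX SA (~: SB) :&: setX (~: SA) SB = set0.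
  apply/setP => -[u v]; rewrite !inE /=.
  by case: (u \in SA); case: (v \in SB).
by rewrite cards0 subn0 !cardsX [#|~: SB|]cardsCs setCK [#|~: SA|]cardsCs setCK.
Qed.

Lemma nd (r : nat) (u v : int) : prime r -> (r%:Z %| v)%Z -> gcdz u v = 1 ->
  ~~ (r%:Z %| u)%Z.
Proof.
move=> pr rv g; apply/negP => ru.
have : (r %| gcdn `|u| `|v|)%N by rewrite dvdn_gcd; apply/andP; split.
move: g; rewrite /gcdz => -[->]; rewrite dvdn1 => /eqP r1.
by move: pr; rewrite r1.
Qed.

Theorem corollary2p12 (p q : nat) (b n2 n1 n0 : int) :
  prime p -> prime q -> p != q ->
  n2 != 0 ->
  (n2 *: 'X^2 + n1 *: 'X + n0%:P : {poly int}).[b] = (p * q)%N%:Z ->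
  gcdz (n2 * b) (p * q)%N%:Z = 1 ->
  gcdz (p * q)%N%:Z (n2 * b ^+ 2 - n0) = 1 ->
  nu (p * q) (n2 *: 'X^2 + n1 *: 'X + n0%:P) = (2 * p + 2 * q - 8)%N.
Proof.
move=> hp hq pq n20 hf g1 g2.
set f := (n2 *: 'X^2 + n1 *: 'X + n0%:P : {poly int}) in hf *.
have fx : forall x : int, f.[x] = n2 * x ^+ 2 + n1 * x + n0.
  by move=> x; rewrite /f !hornerE.
have hf' : n2 * b ^+ 2 + n1 * b + n0 = (p * q)%N%:Z by rewrite -fx.
pose Fr r (u : 'F_r) := n2%:~R * u ^+ 2 + n1%:~R * u + n0%:~R.
have key : forall r, prime r -> forall x : int, (r%:Z %| f.[x])%Z = (Fr r x%:~R == 0).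
  move=> r pr x; rewrite (dvdz_pcharf (pchar_Fp pr)) fx /Fr.
  by rewrite !expr2 !rmorphD !rmorphM.
have cnt : forall r, prime r -> (r %| p * q)%N -> #|[set u : 'F_r | Fr r u == 0]| = 2%N.
  move=> r pr rN.
  have rNz : (r%:Z %| (p * q)%N%:Z)%Z by [].
  apply: (@two_roots _ _ _ _ b%:~R).
  - rewrite -(dvdz_pcharf (pchar_Fp pr)).
    by apply: (contra _ (@nd r _ _ pr rNz g1)); apply: dvdz_mulr.
  - have : ((n2 * b ^+ 2 + n1 * b + n0)%:~R == 0 :> 'F_r).
      by rewrite -(dvdz_pcharf (pchar_Fp pr)) hf'.
    by rewrite !expr2 !rmorphD !rmorphM => /eqP.
  - have : ~~ ((n2 * b ^+ 2 - n0)%:~R == 0 :> 'F_r).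
      by rewrite -(dvdz_pcharf (pchar_Fp pr)); apply: (@nd r _ _ pr rNz); rewrite gcdzC.
    by rewrite !expr2 !rmorphB !rmorphM.
rewrite /nu.
pose phi (x : 'I_(p * q)) : 'F_p * 'F_q := ((x : nat)%:R, (x : nat)%:R).
have -> : [set x : 'I_(p * q) | suitable (p * q) f x] =
  [set x | (fun z : 'F_p * 'F_q => (Fr p z.1 == 0) (+) (Fr q z.2 == 0)) (phi x)].
  by apply/setP => x; rewrite !inE /suitable suit_xor // !key.
rewrite (@card_pre _ _ phi (fun z : 'F_p * 'F_q => (Fr p z.1 == 0) (+) (Fr q z.2 == 0))).
- have -> : [set z : 'F_p * 'F_q | (Fr p z.1 == 0) (+) (Fr q z.2 == 0)] =
    [set z | (z.1 \in [set u | Fr p u == 0]) (+) (z.2 \in [set u | Fr q u == 0])].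
    by apply/setP => z; rewrite !inE.
  rewrite card_xor (cnt p hp (dvdn_mulr _ (dvdnn p))) (cnt q hq (dvdn_mull _ (dvdnn q))).
  have e : forall n m, n = p -> m = q -> (2 * (m - 2) + (n - 2) * 2 = 2 * p + 2 * q - 8)%N.
    by move=> n m -> ->; have := prime_gt1 hp; have := prime_gt1 hq; lia.
  by apply: e; apply: card_Fp.
- have cpq : coprime p q by rewrite prime_coprime // dvdn_prime2.
  have h : forall r, prime r -> forall x y : nat,
      x%:R = y%:R :> 'F_r -> (x == y %[mod r])%N.
    move=> r pr x y e.
    have : ((x%:Z - y%:Z)%:~R == 0 :> 'F_r) by rewrite rmorphB /= -[x%:Z%:~R]/(x%:R) -[y%:Z%:~R]/(y%:R) e subrr.
    rewrite -(dvdz_pcharf (pchar_Fp pr)) -eqz_mod_dvd.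
    by rewrite !modz_nat eqz_nat.
  move=> x y [ep eq]; apply: val_inj => /=.
  move: (h p hp _ _ ep) (h q hq _ _ eq) => e1 e2.
  have : (x == y %[mod p * q])%N by rewrite chinese_remainder //; apply/andP; split.
  by rewrite !modn_small // => /eqP.
- by rewrite card_prod !card_Fp // card_ord.
Qed.
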